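(* Let $G$ be a $B_2$-EPG graph given with a representation and let $X$ be a clique of $G$. Then either there is a set of at most three rows such that every U-vertex of $X$ intersects one of these rows, or there is a set of at most three columns such that every Z-vertex of $X$ intersects one of these columns.
   Context: A graph $G$ is a $B_k$-EPG graph if each vertex $u$ can be assigned a path $P_u$ in the planar orthogonal grid with at most $k$ bends such that $uv\in E(G)$ iff $P_u$ and $P_v$ share at least one grid edge (a representation); for $B_2$-EPG graphs one assumes w.l.o.g. every path has exactly two bends, so every vertex is a Z-vertex or a U-vertex. A vertex $u$ intersects a row (column) if $P_u$ contains a grid edge of it. A Z-vertex intersects exactly two rows and one column; a U-vertex intersects exactly one row and two columns. *)

(* Defs.v *)
From HB Require Import structures.
From mathcomp Require Import all_boot all_order all_algebra.
Set Implicit Arguments. Unset Strict Implicit. Unset Printing Implicit Defensive.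
Import Order.TTheory GRing.Theory Num.Theory.
Local Open Scope ring_scope.

(* Grid edges of the planar orthogonal grid Z x Z:
   HE x y = horizontal edge from (x,y) to (x+1,y)  (lies in row y);
   VE x y = vertical edge from (x,y) to (x,y+1)    (lies in column x). *)
Inductive gedge := HE (x y : int) | VE (x y : int).

Definition in_hseg (r a b : int) (e : gedge) : Prop :=
  match e with
  | HE x y => y = r /\ Num.min a b <= x /\ x < Num.max a b
  | VE _ _ => False
  end.

Definition in_vseg (c a b : int) (e : gedge) : Prop :=
  match e with
  | VE x y => x = c /\ Num.min a b <= y /\ y < Num.max a b
  | HE _ _ => False
  end.

(* Paths with exactly two bends (three nonempty maximal segments, alternating).
   ZPath y1 y2 x a b : horizontal (row y1, from column a to x), vertical
     (column x, from row y1 to y2), horizontal (row y2, from column x to b);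
     it intersects two rows and one column.
   UPath x1 x2 y a b : vertical (column x1, from row a to y), horizontal
     (row y, from column x1 to x2), vertical (column x2, from row y to b);
     it intersects one row and two columns. *)
Inductive path2 :=
  | ZPath (y1 y2 x a b : int)
  | UPath (x1 x2 y a b : int).

(* every segment has positive length, so there are exactly two bends *)
Definition valid_path2 (p : path2) : Prop :=
  match p with
  | ZPath y1 y2 x a b => a <> x /\ y1 <> y2 /\ b <> x
  | UPath x1 x2 y a b => a <> y /\ x1 <> x2 /\ b <> y
  end.

Definition path_edge (p : path2) (e : gedge) : Prop :=
  match p with
  | ZPath y1 y2 x a b => in_hseg y1 a x e \/ in_vseg x y1 y2 e \/ in_hseg y2 x b e
  | UPath x1 x2 y a b => in_vseg x1 a y e \/ in_hseg y x1 x2 e \/ in_vseg x2 y b e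
  end.

Definition share_edge (p q : path2) : Prop :=
  exists e, path_edge p e /\ path_edge q e.

Definition intersects_row (p : path2) (r : int) : Prop :=
  exists x, path_edge p (HE x r).

Definition intersects_col (p : path2) (c : int) : Prop :=
  exists y, path_edge p (VE c y).

Definition is_Zpath (p : path2) : bool := if p is ZPath _ _ _ _ _ then true else false.
Definition is_Upath (p : path2) : bool := if p is UPath _ _ _ _ _ then true else false.

Definition B2EPG_rep (V : finType) (adj : rel V) (P : V -> path2) : Prop :=
  (forall u, valid_path2 (P u)) /\
  (forall u v, u != v -> (adj u v <-> share_edge (P u) (P v))).

Definition simple_graph (V : finType) (adj : rel V) : Prop :=
  irreflexive adj /\ symmetric adj.

Definition is_clique (V : finType) (adj : rel V) (X : {set V}) : Prop :=
  forall u v, u \in X -> v \in X -> u != v -> adj u v.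

(* Main.v *)
Require Import Defs.
From HB Require Import structures.
From mathcomp Require Import all_boot all_order all_algebra zify.
Import Order.TTheory GRing.Theory Num.Theory.
Local Open Scope ring_scope.
From Stdlib Require Import Classical.

Definition inR (y a b : int) := y = a \/ y = b.
Definition shared2 (y a1 b1 a2 b2 a3 b3 a4 b4 : int) :=
  (inR y a1 b1 /\ inR y a2 b2) \/ (inR y a1 b1 /\ inR y a3 b3) \/
  (inR y a1 b1 /\ inR y a4 b4) \/ (inR y a2 b2 /\ inR y a3 b3) \/
  (inR y a2 b2 /\ inR y a4 b4) \/ (inR y a3 b3 /\ inR y a4 b4).

Lemma aux (a b a' b' y c : int) : y <> a -> y <> b -> c <> a -> c <> b ->
  (exists p, inR p a b /\ inR p a' b') -> inR y a' b' -> inR c a' b' -> y = c.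
Proof.
rewrite /inR => h1 h2 h3 h4 [p [Hp Hp']] Hy Hc.
destruct Hp, Hp', Hy, Hc; subst; congruence.
Qed.

Lemma comb (a1 b1 a2 b2 a3 b3 a4 b4 : int) :
  (exists y, inR y a1 b1 /\ inR y a2 b2) ->
  (exists y, inR y a1 b1 /\ inR y a3 b3) ->
  (exists y, inR y a1 b1 /\ inR y a4 b4) ->
  exists c, forall y, shared2 y a1 b1 a2 b2 a3 b3 a4 b4 -> y = a1 \/ y = b1 \/ y = c.
Proof.
move=> M2 M3 M4.
case: (classic (exists c, c <> a1 /\ c <> b1 /\ shared2 c a1 b1 a2 b2 a3 b3 a4 b4)).
- move=> [c [hc1 [hc2 hc]]]; exists c => y hy.
  case: (classic (y = a1)) => ya1; first by left.
  case: (classic (y = b1)) => yb1; first by right; left.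
  right; right.
  have A2 := @aux a1 b1 _ _ y c ya1 yb1 hc1 hc2 M2.
  have A3 := @aux a1 b1 _ _ y c ya1 yb1 hc1 hc2 M3.
  have A4 := @aux a1 b1 _ _ y c ya1 yb1 hc1 hc2 M4.
  have Ha : ~ inR y a1 b1 by rewrite /inR; tauto.
  have Hb : ~ inR c a1 b1 by rewrite /inR; tauto.
  move: hy hc; rewrite /shared2.
  case=> [[? ?]|[[? ?]|[[? ?]|[[? ?]|[[? ?]|[? ?]]]]]]; try tauto;
  case=> [[? ?]|[[? ?]|[[? ?]|[[? ?]|[[? ?]|[? ?]]]]]]; try tauto; auto.
- move=> hn; exists 0 => y hy.
  case: (classic (y = a1)) => ya1; first by left.
  case: (classic (y = b1)) => yb1; first by right; left.
  by exfalso; apply: hn; exists y.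
Qed.

Lemma pick (y x1 x2 c1 c2 c3 c4 a1 b1 a2 b2 a3 b3 a4 b4 : int) :
  c1 <> c2 -> c1 <> c3 -> c1 <> c4 -> c2 <> c3 -> c2 <> c4 -> c3 <> c4 ->
  (inR y a1 b1 \/ c1 = x1 \/ c1 = x2) ->
  (inR y a2 b2 \/ c2 = x1 \/ c2 = x2) ->
  (inR y a3 b3 \/ c3 = x1 \/ c3 = x2) ->
  (inR y a4 b4 \/ c4 = x1 \/ c4 = x2) ->
  shared2 y a1 b1 a2 b2 a3 b3 a4 b4.
Proof.
rewrite /shared2 => ? ? ? ? ? ? h1 h2 h3 h4.
destruct h1 as [h1|[h1|h1]]; destruct h2 as [h2|[h2|h2]];
destruct h3 as [h3|[h3|h3]]; destruct h4 as [h4|[h4|h4]];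
  subst; first [tauto | congruence].
Qed.

Lemma ZZ (y1 y2 x a b y1' y2' x' a' b' : int) : x <> x' ->
  share_edge (ZPath y1 y2 x a b) (ZPath y1' y2' x' a' b') ->
  exists p, inR p y1 y2 /\ inR p y1' y2'.
Proof.
move=> hx [[ex ey|ex ey] [h1 h2]] /=; rewrite /inR /=.
- exists ey. move: h1 h2 => /= h1 h2.
  by destruct h1 as [[? _]|[[]|[? _]]]; destruct h2 as [[? _]|[[]|[? _]]]; tauto.
- move: h1 h2 => /= h1 h2.
  destruct h1 as [[]|[[? _]|[]]]; destruct h2 as [[]|[[? _]|[]]]; congruence.
Qed.

Lemma UZ (x1 x2 y a b y1 y2 x a' b' : int) :
  share_edge (UPath x1 x2 y a b) (ZPath y1 y2 x a' b') ->
  inR y y1 y2 \/ x = x1 \/ x = x2.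
Proof.
move=> [[ex ey|ex ey] [h1 h2]] /=; rewrite /inR; move: h1 h2 => /= h1 h2.
- destruct h1 as [[]|[[? _]|[]]]; destruct h2 as [[? _]|[[]|[? _]]]; subst; tauto.
- destruct h1 as [[? _]|[[]|[? _]]]; destruct h2 as [[]|[[? _]|[]]]; subst; tauto.
Qed.

Lemma mlt (x1 x2 : int) : x1 <> x2 -> Num.min x1 x2 <= Num.min x1 x2 /\ Num.min x1 x2 < Num.max x1 x2.
Proof. move=> h; split => //. have [l|l] : x1 < x2 \/ x2 < x1 by lia.
- by rewrite (min_l (ltW l)) (max_r (ltW l)).
- by rewrite (min_r (ltW l)) (max_l (ltW l)).
Qed.


Definition zcol (p : path2) : int := if p is ZPath _ _ x _ _ then x else 0.

Theorem lemma10 (V : finType) (adj : rel V) (P : V -> path2) (X : {set V}) :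
  simple_graph adj -> B2EPG_rep adj P -> is_clique adj X ->
  (exists rows : seq int, (size rows <= 3)%N /\
     forall u, u \in X -> is_Upath (P u) ->
       exists2 r, r \in rows & intersects_row (P u) r)
  \/
  (exists cols : seq int, (size cols <= 3)%N /\
     forall u, u \in X -> is_Zpath (P u) ->
       exists2 c, c \in cols & intersects_col (P u) c).
Proof.
move=> _ [Hval Hrep] Hcl.
set s := undup [seq zcol (P z) | z <- enum X & is_Zpath (P z)].
have Hs : forall c, c \in s -> exists z, [/\ z \in X, is_Zpath (P z) & zcol (P z) = c].
  move=> c; rewrite mem_undup => /mapP [z]; rewrite mem_filter mem_enum => /andP[hz hX] ->.
  by exists z.
have Hs2 : forall z, z \in X -> is_Zpath (P z) -> zcol (P z) \in s.
  move=> z hX hz; rewrite mem_undup; apply/mapP; exists z => //.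
  by rewrite mem_filter mem_enum hz hX.
have Hu : uniq s := undup_uniq _.
case: (leqP (size s) 3) => hsz.
  right; exists s; split => // u hu hz; exists (zcol (P u)); first exact: Hs2.
  move: (Hval u) hz; case: (P u) => //= y1 y2 x a b [_ [hy _]] _.
  by exists (Num.min y1 y2); right; left => /=; split => //; apply: mlt.
left. clear Hs2. move: Hu hsz Hs; case: s => [|c1 [|c2 [|c3 [|c4 t]]]] //= Hu _ Hs.
have d12 : c1 <> c2 by move=> e; move: Hu; rewrite e !inE eqxx.
have d13 : c1 <> c3 by move=> e; move: Hu; rewrite e !inE eqxx ?orbT ?andbF.
have d14 : c1 <> c4 by move=> e; move: Hu; rewrite e !inE eqxx ?orbT ?andbF.
have d23 : c2 <> c3 by move=> e; move: Hu; rewrite e !inE eqxx ?orbT ?andbF.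
have d24 : c2 <> c4 by move=> e; move: Hu; rewrite e !inE eqxx ?orbT ?andbF.
have d34 : c3 <> c4 by move=> e; move: Hu; rewrite e !inE eqxx ?orbT ?andbF.
have [z1 [hz1 hZ1 hc1]] := Hs c1 ltac:(by rewrite !inE eqxx).
have [z2 [hz2 hZ2 hc2]] := Hs c2 ltac:(by rewrite !inE eqxx ?orbT).
have [z3 [hz3 hZ3 hc3]] := Hs c3 ltac:(by rewrite !inE eqxx ?orbT).
have [z4 [hz4 hZ4 hc4]] := Hs c4 ltac:(by rewrite !inE eqxx ?orbT).
have nz : forall z z' c c', zcol (P z) = c -> zcol (P z') = c' -> c <> c' -> z != z'.
  by move=> z z' c c' h h' hn; apply/eqP => e; subst; apply: hn.
have sh : forall v w, v \in X -> w \in X -> v != w -> share_edge (P v) (P w).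
  by move=> v w hv hw n; apply/(Hrep v w n); apply: Hcl.
have S12 := sh _ _ hz1 hz2 (nz _ _ _ _ hc1 hc2 d12).
have S13 := sh _ _ hz1 hz3 (nz _ _ _ _ hc1 hc3 d13).
have S14 := sh _ _ hz1 hz4 (nz _ _ _ _ hc1 hc4 d14).
have Uz : forall u z, is_Upath (P u) -> is_Zpath (P z) -> u != z.
  by move=> u z hu hz; apply/eqP => e; subst; move: hu hz; case: (P z).
case E1 : (P z1) hZ1 hc1 S12 S13 S14 Uz => [y1 y1' x1 a1 b1|] // _ /= hc1 S12 S13 S14 Uz.
case E2 : (P z2) hZ2 hc2 S12 => [y2 y2' x2 a2 b2|] // _ /= hc2 S12.
case E3 : (P z3) hZ3 hc3 S13 => [y3 y3' x3 a3 b3|] // _ /= hc3 S13.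
case E4 : (P z4) hZ4 hc4 S14 => [y4 y4' x4 a4 b4|] // _ /= hc4 S14.
subst.
have [c Hc] := @comb _ _ _ _ _ _ _ _ (@ZZ _ _ _ _ _ _ _ _ _ _ d12 S12) (@ZZ _ _ _ _ _ _ _ _ _ _ d13 S13) (@ZZ _ _ _ _ _ _ _ _ _ _ d14 S14).
exists [:: y1; y1'; c]; split => // u hu hU.
have T : forall z, z \in X -> is_Zpath (P z) -> share_edge (P u) (P z).
  by move=> z hz hZ; apply: sh => //; apply: Uz.
have T1 := T _ hz1; rewrite E1 in T1; have {}T1 := T1 isT.
have T2 := T _ hz2; rewrite E2 in T2; have {}T2 := T2 isT.
have T3 := T _ hz3; rewrite E3 in T3; have {}T3 := T3 isT.
have T4 := T _ hz4; rewrite E4 in T4; have {}T4 := T4 isT.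
move: (Hval u) hU T1 T2 T3 T4; case: (P u) => //= ux1 ux2 uy ua ub [_ [hx _]] _ T1 T2 T3 T4.
have H := Hc uy (@pick _ _ _ _ _ _ _ _ _ _ _ _ _ _ _ d12 d13 d14 d23 d24 d34 (@UZ _ _ _ _ _ _ _ _ _ _ T1) (@UZ _ _ _ _ _ _ _ _ _ _ T2) (@UZ _ _ _ _ _ _ _ _ _ _ T3) (@UZ _ _ _ _ _ _ _ _ _ _ T4)).
exists uy.
  by rewrite !inE; case: H => [->|[->|->]]; rewrite eqxx ?orbT.
by exists (Num.min ux1 ux2); right; left => /=; split => //; apply: mlt.
Qed.
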